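(* Let $T:\mathbb{Z}_{\ge 0}\to\mathbb{R}$ satisfy $T(mn) = T(m)T(n) + T(m-1)T(n-1)$ for all integers $m,n\ge 1$, and suppose $T(0)=0$ and $T(1)=1$. Then $T(2)\in\{0,1,3\}$. *)

(* Defs.v *)
From Stdlib Require Import Reals.

(* Main.v *)
Require Import Defs.
From Stdlib Require Import Reals Lra Psatz.
Open Scope R_scope.

Theorem lemma11 (T : nat -> R)
  (hfun : forall m n : nat, (1 <= m)%nat -> (1 <= n)%nat ->
     T (m * n)%nat = T m * T n + T (m - 1)%nat * T (n - 1)%nat)
  (h0 : T 0%nat = 0) (h1 : T 1%nat = 1) :
  T 2%nat = 0 \/ T 2%nat = 1 \/ T 2%nat = 3.
Proof.
  assert (H: forall m n, T (S m * S n)%nat = T (S m) * T (S n) + T m * T n).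
  { intros m n. rewrite hfun by lia. simpl (S m - 1)%nat. simpl (S n - 1)%nat.
    rewrite !Nat.sub_0_r. reflexivity. }
  pose proof (H 1 1)%nat as e4. pose proof (H 1 2)%nat as e6.
  pose proof (H 2 2)%nat as e9. pose proof (H 1 3)%nat as e8.
  pose proof (H 2 3)%nat as e12. pose proof (H 1 5)%nat as e12'.
  pose proof (H 1 4)%nat as e10. pose proof (H 3 3)%nat as e16.
  pose proof (H 1 7)%nat as e16'. pose proof (H 1 6)%nat as e14.
  pose proof (H 2 4)%nat as e15. pose proof (H 1 8)%nat as e18.
  pose proof (H 2 5)%nat as e18'. pose proof (H 1 14)%nat as e30.
  pose proof (H 2 9)%nat as e30'.
  simpl Nat.mul in *. rewrite h1 in *.
  set (a := T 2%nat) in *. set (b := T 3%nat) in *.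
  rewrite e4 in *. rewrite e6 in *. rewrite e9 in *. rewrite e8 in *.
  assert (t5 : T 5%nat = b*(a*a+1) + a*b - a*(a*b+a)) by lra.
  rewrite t5 in *. rewrite e10 in *.
  assert (t7 : T 7%nat = (a*a+1)*(a*a+1) + b*b - a*(a*(a*a+1)+b)) by lra.
  rewrite t7 in *. rewrite e14, e15 in *.
  assert (E1 : b*(1-2*a-a*a) + 3*a*a*a + a = 0) by nra.
  assert (Ea : b*(-1+a-2*a*a) + (a*a*a*a+a*a+2*a) = 0) by nra.
  assert (G : a*((a-1)*((a-1)*((a-3)*(a*a+a+1)))) = 0).
  { replace (a*((a-1)*((a-1)*((a-3)*(a*a+a+1))))) with
      ((b*(1-2*a-a*a) + 3*a*a*a + a)*(-1+a-2*a*a)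
       - (b*(-1+a-2*a*a) + (a*a*a*a+a*a+2*a))*(1-2*a-a*a)) by ring.
    rewrite E1, Ea. ring. }
  assert (Hp : a*a+a+1 <> 0) by nra.
  apply Rmult_integral in G as [G|G]; [left; exact G|].
  apply Rmult_integral in G as [G|G]; [right; left; lra|].
  apply Rmult_integral in G as [G|G]; [right; left; lra|].
  apply Rmult_integral in G as [G|G]; [right; right; lra|].
  contradiction.
Qed.
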